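(* Consider a finite set of time periods $\mathcal{T}$ and a finite set of user types $\mathcal{K}=\{1,\dots,K\}$, where type $k$ has aggregate demand $D_k^t\ge 0$ and value of lost load $V_k^t$ in period $t$, with $V_1^t\le\cdots\le V_K^t$. Let $D_a^t=\sum_kD_k^t>0$. For capacity $r\ge0$ and random variables $\Theta^t$ supported in $[0,1]$, let $s^t=\min(D_a^t,r\Theta^t)$, $d_k^t=\frac{D_k^t}{D_a^t}s^t$, $C_s^t(r,\Theta^t)=\sum_k(V_k^t-p)(D_k^t-d_k^t)$. Fix $p$ with $p\le V_1^t$ for all $t$, $c_r>0$, $\xi\ge0$. Let $f^{\mathrm{No}}(r)=\sum_tp\,\mathbb{E}[s^t]-c_rr$ and $f^{\mathrm{Ins}}(r,\pi)=\sum_k\sum_t\pi_k^tD_k^t+\sum_tp\,\mathbb{E}[s^t]-c_rr-\sum_t\mathbb{E}[C_s^t(r,\Theta^t)]$. Let $(r^*,\pi^* )$ be the optimal solution of Problem-Ins: minimize $\sum_k\sum_t\pi_k^tD_k^t$ over $r\ge0,\pi$ subject to $f^{\mathrm{Ins}}(r,\pi)\ge\xi$, $\pi_k^t-\pi_m^t=(V_k^t-V_m^t)\mathbb{E}[1-s^t/D_a^t]$ for all $t,m,k$, and $0\le\pi_k^t\le(V_k^t-p)\mathbb{E}[1-s^t/D_a^t]$ for all $t,k$. Let $r^\ddagger$ be the optimal solution of Problem-NoIns: maximize $r\ge0$ subject to $f^{\mathrm{No}}(r)\ge\xi$. Then the users' total cost under the insurance-providing utility, $\sum_t\sum_k(\pi_k^{t*}+p)D_k^t$,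 is no larger than the users' total cost under the no-insurance utility, $\sum_t\big(p\,\mathbb{E}[s^t(r^\ddagger,\Theta^t)]+\sum_kV_k^t\,\mathbb{E}[D_k^t-d_k^t(r^\ddagger,\Theta^t)]\big)$.
   Context: Expectations are over $\Theta^t$. Under the insurance contract, a user of type $k$ with demand $D_i^t$ who buys the type-$k$ item pays $\sum_t(\pi_k^t+p)D_i^t$ (lost load is fully reimbursed); without insurance, a user pays the electricity bill $p$ on delivered energy $d_i^t=\frac{D_i^t}{D_a^t}s^t$ and incurs lost-load cost $V_i^t(D_i^t-d_i^t)$ in expectation. The problems are assumed feasible with optimal solutions as described. *)

(* Defs.v *)
From mathcomp Require Import all_boot all_order all_algebra.
From mathcomp Require Import all_classical all_reals all_analysis.
Set Implicit Arguments. Unset Strict Implicit. Unset Printing Implicit Defensive.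
Import Order.TTheory GRing.Theory Num.Theory.
Local Open Scope ring_scope.

(* Model: T = finite set of periods (a finType); user types are 'I_K
   (type k+1 of the paper is the ordinal k). *)

Section Utility.
Variables (R : realType) (d : measure_display) (Omega : measurableType d).
Variable (P : probability Omega R).
Variables (T : finType) (K : nat).
Variables (D V : 'I_K -> T -> R) (p c_r xi : R) (Theta : T -> Omega -> R).

Definition Ex (f : Omega -> R) : R := Rintegral P setT f.

Definition Dagg (t : T) : R := \sum_(k < K) D k t.

Definition supply (r : R) (t : T) (th : R) : R := Num.min (Dagg t) (r * th).

Definition delivered (r : R) (k : 'I_K) (t : T) (th : R) : R :=
  D k t / Dagg t * supply r t th.

Definition Cs (r : R) (t : T) (th : R) : R :=
  \sum_(k < K) (V k t - p) * (D k t - delivered r k t th).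

Definition Es (r : R) (t : T) : R := Ex (fun w => supply r t (Theta t w)).

Definition Eshort (r : R) (t : T) : R :=
  Ex (fun w => 1 - supply r t (Theta t w) / Dagg t).

Definition f_No (r : R) : R := \sum_(t : T) p * Es r t - c_r * r.

Definition f_Ins (r : R) (pi : 'I_K -> T -> R) : R :=
  \sum_(k < K) \sum_(t : T) pi k t * D k t + \sum_(t : T) p * Es r t
  - c_r * r - \sum_(t : T) Ex (fun w => Cs r t (Theta t w)).

Definition ins_objective (pi : 'I_K -> T -> R) : R :=
  \sum_(k < K) \sum_(t : T) pi k t * D k t.

Definition feasible_Ins (r : R) (pi : 'I_K -> T -> R) : Prop :=
  [/\ 0 <= r, xi <= f_Ins r pi,
      (forall t m k, pi k t - pi m t = (V k t - V m t) * Eshort r t) &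
      (forall t k, 0 <= pi k t /\ pi k t <= (V k t - p) * Eshort r t)].

Definition optimal_Ins (r : R) (pi : 'I_K -> T -> R) : Prop :=
  feasible_Ins r pi /\
  forall r' pi', feasible_Ins r' pi' -> ins_objective pi <= ins_objective pi'.

Definition feasible_No (r : R) : Prop := 0 <= r /\ xi <= f_No r.

Definition optimal_No (r : R) : Prop :=
  feasible_No r /\ forall r', feasible_No r' -> r' <= r.

Definition cost_Ins (pi : 'I_K -> T -> R) : R :=
  \sum_(t : T) \sum_(k < K) (pi k t + p) * D k t.

Definition cost_No (r : R) : R :=
  \sum_(t : T) (p * Es r t +
     \sum_(k < K) V k t * Ex (fun w => D k t - delivered r k t (Theta t w))).

End Utility.

(* Main.v *)
Require Import Defs.
From mathcomp Require Import all_boot all_order all_algebra.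
From mathcomp Require Import all_classical all_reals all_analysis.
From mathcomp Require Import measurable_realfun.
Import Order.TTheory GRing.Theory Num.Theory.
From mathcomp Require Import measurable_realfun ring lra.
Import Order.TTheory GRing.Theory Num.Theory.
Local Open Scope ring_scope.

Lemma supply_int (R : realType) (d : measure_display)
  (Omega : measurableType d) (P : probability Omega R)
  (T : finType) (K : nat) (D : 'I_K -> T -> R) (Theta : T -> Omega -> R)
  (hTheta_meas : forall t, measurable_fun setT (Theta t))
  (hTheta_range : forall t w, 0 <= Theta t w <= 1) (r : R) (t : T)
  (hDa : 0 < Dagg D t) :
  P.-integrable setT (EFin \o (fun w => supply D r t (Theta t w))).
Proof.
apply/integrableP; split.
  apply/measurable_EFinP.
  apply: (@measurable_minr _ _ _ _ (cst (Dagg D t)) (fun w => r * Theta t w)).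
    exact: measurable_cst.
  apply: measurable_funM => //; exact: measurable_cst.
apply: (@le_lt_trans _ _ ((Dagg D t + `|r|)%:E * P setT)%E).
  apply: integral_le_bound => //.
  - apply: measurableT_comp => //.
    apply: (@measurable_minr _ _ _ _ (cst (Dagg D t)) (fun w => r * Theta t w)).
      exact: measurable_cst.
    apply: measurable_funM => //; exact: measurable_cst.
  - by rewrite lee_fin addr_ge0 // ltW.
  apply: aeW => w _ /=; rewrite lee_fin /supply.
  have /andP[h0 h1] := hTheta_range t w.
  have hr : `|r * Theta t w| <= `|r|.
    by rewrite normrM (ger0_norm h0) ler_piMr.
  rewrite /Num.min; case: ifP => _; last first.
    rewrite (le_trans hr) // lerDr ltW //.
  by rewrite gtr0_norm // lerDl.
by rewrite probability_setT mule1 ltry.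
Qed.

Lemma Ex_aff (R : realType) (d : measure_display)
  (Omega : measurableType d) (P : probability Omega R)
  (g h : Omega -> R) (a b : R) :
  P.-integrable setT (EFin \o g) ->
  (forall w, h w = a + b * g w) -> Ex P h = a + b * Ex P g.
Proof.
move=> ig hh.
have -> : h = fun w => a + b * g w by apply: funext.
rewrite /Ex RintegralD //.
- by rewrite Rintegral_cst // RintegralZl // (congr1 fine (probability_setT P)) mulr1.
- apply/integrableP; split; first exact: measurable_cst.
  rewrite integral_cst //= (probability_setT P) mule1; exact: ltry.
- have := integrableZl measurableT b ig.
  by apply: eq_integrable => // x _ /=; rewrite EFinM.
Qed.

Arguments supply_int {R d Omega} P {T K D Theta}.
Arguments Ex_aff {R d Omega P g h a b}.

Lemma cost_Ins_obj (R : realType) (T : finType) (K : nat)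
  (D pi : 'I_K -> T -> R) (p : R) :
  cost_Ins D p pi = ins_objective D pi + \sum_(t : T) \sum_(k < K) p * D k t.
Proof.
rewrite /cost_Ins /ins_objective [in RHS]exchange_big /= -big_split.
apply: eq_bigr => t _; rewrite -big_split; apply: eq_bigr => k _ /=.
by rewrite mulrDl.
Qed.

Theorem proposition3 (R : realType) (d : measure_display)
  (Omega : measurableType d) (P : probability Omega R)
  (T : finType) (K : nat) (hK : (0 < K)%N)
  (D V : 'I_K -> T -> R) (p c_r xi : R) (Theta : T -> Omega -> R)
  (hD : forall k t, 0 <= D k t)
  (hDa : forall t, 0 < Dagg D t)
  (hV : forall t (k m : 'I_K), (k <= m)%N -> V k t <= V m t)
  (hTheta_meas : forall t, measurable_fun setT (Theta t))
  (hTheta_range : forall t w, 0 <= Theta t w <= 1)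
  (hp : forall t, p <= V (Ordinal hK) t)
  (hcr : 0 < c_r) (hxi : 0 <= xi)
  (rs : R) (pis : 'I_K -> T -> R) (rd : R)
  (hopt_ins : optimal_Ins P D V p c_r xi Theta rs pis)
  (hopt_no : optimal_No P D p c_r xi Theta rd) :
  cost_Ins D p pis <= cost_No P D V p Theta rd.
Proof.
have ig t := supply_int P hTheta_meas hTheta_range rd t (hDa t).
have hDa0 t : Dagg D t != 0 by rewrite gt_eqF.
have E1 t : Eshort P D Theta rd t = 1 + (- (Dagg D t)^-1) * Es P D Theta rd t.
  apply: Ex_aff (ig t) _ => w; by rewrite mulNr mulrC.
have E2 t : Ex P (fun w => Cs D V p rd t (Theta t w)) =
    \sum_(k < K) (V k t - p) * D k t
    + (- \sum_(k < K) (V k t - p) * D k t / Dagg D t) * Es P D Theta rd t.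
  apply: Ex_aff (ig t) _ => w.
  rewrite /Cs /delivered mulNr big_distrl -sumrB /=.
  by apply: eq_bigr => k _; ring.
have E3 k t : Ex P (fun w => D k t - delivered D rd k t (Theta t w)) =
    D k t + (- (D k t / Dagg D t)) * Es P D Theta rd t.
  by apply: Ex_aff (ig t) _ => w; rewrite /delivered mulNr.
pose pim k t := (V k t - p) * Eshort P D Theta rd t.
have hobj : ins_objective D pim = \sum_(t : T) Ex P (fun w => Cs D V p rd t (Theta t w)).
  rewrite /ins_objective exchange_big /=; apply: eq_bigr => t _.
  rewrite E2 mulNr big_distrl -sumrB /=; apply: eq_bigr => k _.
  rewrite /pim E1; field; exact: hDa0.
have feas : feasible_Ins P D V p c_r xi Theta rd pim.
  case: hopt_no => [[hr hf] _].
  split => //.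
  - have -> : f_Ins P D V p c_r Theta rd pim = f_No P D p c_r Theta rd.
      by rewrite /f_Ins /f_No -/(ins_objective D pim) hobj; ring.
    exact: hf.
  - by move=> t m k; rewrite /pim; ring.
  - move=> t k; split; last exact: lexx.
    apply: mulr_ge0.
      rewrite subr_ge0; apply: le_trans (hp t) _; exact: hV.
    apply: Rintegral_ge0 => w _.
    rewrite subr_ge0 ler_pdivrMr // mul1r /supply; by rewrite ge_min lexx.
have hle := (proj2 hopt_ins) rd pim feas.
apply: (@le_trans _ _ (cost_Ins D p pim)).
  by rewrite !cost_Ins_obj lerD2r.
rewrite le_eqVlt; apply/orP; left; apply/eqP.
rewrite /cost_Ins /cost_No; apply: eq_bigr => t _.
under [X in _ = _ + X]eq_bigr do rewrite E3.
have -> : p * Es P D Theta rd t =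
    \sum_(k < K) p * Es P D Theta rd t / Dagg D t * D k t.
  by rewrite -mulr_sumr -/(Dagg D t); field; exact: hDa0.
rewrite -big_split; apply: eq_bigr => k _ /=.
rewrite /pim E1; field; exact: hDa0.
Qed.
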